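(* Let $\varphi\colon\mathbb X\to\mathbb R$ be locally Lipschitz continuous, let $\Phi\colon\mathbb X\rightrightarrows\mathbb Y$ have closed graph, fix $\bar y\in\operatorname{Im}\Phi$, and consider the problem $\min\{\varphi(x)\mid \bar y\in\Phi(x)\}$. Let $\bar x$ be a local minimizer of this problem such that, for each critical direction $u\in\mathbb S_{\mathbb X}$ of the problem at $\bar x$, $\Phi$ is asymptotically regular at $(\bar x,\bar y)$ in direction $u$. Then $\bar x$ is M-stationary, i.e., there is $\lambda\in\mathbb Y$ with $0\in\partial\varphi(\bar x)+D^*\Phi(\bar x,\bar y)(\lambda)$.
   Context: $\mathbb X,\mathbb Y$ Euclidean spaces, $\mathbb S_{\mathbb X}$ the unit sphere. $\partial\varphi$ is the limiting (Mordukhovich) subdifferential, $\widehat D^*$ and $D^*$ are the regular and limiting coderivatives: $\widehat D^*\Phi(x,y)(y^* )=\{x^*\mid (x^*,-y^* )\in\widehat{\mathcal N}_{\operatorname{gph}\Phi}(x,y)\}$, analogously $D^*$ with the limiting normal cone. For a set-valued $\Psi$, $\operatorname{Im}\Psi=\bigcup_{z}\Psi(z)$. Critical direction: $u\in\mathbb S_{\mathbb X}$ is critical at feasible $\bar x$ if there are $u_k\to u$, $v_k\to0$, $t_k\searrow0$ with $(\bar x+t_ku_k,\bar y+t_kv_k)\in\operatorname{gph}\Phi$ for all $k$ and $\limsup_k(\varphi(\bar x+t_ku_k)-\varphi(\bar x))/t_k\le0$. Asymptotic regularity in direction $u$: $\Phi$ is asymptotically regular at $(\bar x,\bar y)\in\operatorname{gph}\Phi$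 in direction $u\in\mathbb S_{\mathbb X}$ if for all sequences $\{(x_k,y_k)\}\subset\operatorname{gph}\Phi$, $\{x_k^*\}\subset\mathbb X$, $\{\lambda_k\}\subset\mathbb Y$ and $x^*\in\mathbb X$, $y^*\in\mathbb Y$ with $x_k\notin\Phi^{-1}(\bar y)$, $y_k\ne\bar y$, $x_k^*\in\widehat D^*\Phi(x_k,y_k)(\lambda_k)$ for all $k$ and $x_k\to\bar x$, $y_k\to\bar y$, $x_k^*\to x^*$, $(x_k-\bar x)/\|x_k-\bar x\|\to u$, $(y_k-\bar y)/\|x_k-\bar x\|\to0$, $\|\lambda_k\|\to\infty$, $(y_k-\bar y)/\|y_k-\bar y\|-\lambda_k/\|\lambda_k\|\to0$, $(\|y_k-\bar y\|/\|x_k-\bar x\|)\lambda_k\to y^*$, one has $x^*\in\operatorname{Im}D^*\Phi(\bar x,\bar y)$. *)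

(* Defs.v *)
(* R : realType, Euclidean spaces X = 'rV[R]_n, Y = 'rV[R]_m
   with the standard inner product and Euclidean norm. *)
From HB Require Import structures.
From mathcomp Require Import all_boot all_order all_algebra.
From mathcomp Require Import all_classical all_reals all_analysis.
Set Implicit Arguments. Unset Strict Implicit. Unset Printing Implicit Defensive.
Import Order.TTheory GRing.Theory Num.Theory.
Import numFieldNormedType.Exports.
Local Open Scope ring_scope.
Local Open Scope classical_set_scope.

Section Defs.
Variable R : realType.

Definition dotv (n : nat) (u v : 'rV[R]_n) : R := \sum_(i < n) u ord0 i * v ord0 i.
Definition enorm (n : nat) (u : 'rV[R]_n) : R := Num.sqrt (dotv u u).
Definition pnorm (n m : nat) (a : 'rV[R]_n) (b : 'rV[R]_m) : R :=
  Num.sqrt (dotv a a + dotv b b).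

Definition cvgv (n : nat) (s : nat -> 'rV[R]_n) (l : 'rV[R]_n) : Prop :=
  (fun k => enorm (s k - l)) @ \oo --> (0 : R).

Definition unit_sphere (n : nat) (u : 'rV[R]_n) : Prop := enorm u = 1.

Definition locally_lipschitz (n : nat) (phi : 'rV[R]_n -> R) : Prop :=
  forall x : 'rV[R]_n, exists L : R, exists delta : R, 0 < delta /\
    forall y z : 'rV[R]_n, enorm (y - x) < delta -> enorm (z - x) < delta ->
      `|phi y - phi z| <= L * enorm (y - z).

(* A set-valued map Phi : X ⇉ Y is given by its graph relation: Phi x y <-> y ∈ Φ(x). *)
Definition closed_graph (n m : nat) (Phi : 'rV[R]_n -> 'rV[R]_m -> Prop) : Prop :=
  forall (xk : nat -> 'rV[R]_n) (yk : nat -> 'rV[R]_m) x y,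
    (forall k, Phi (xk k) (yk k)) -> cvgv xk x -> cvgv yk y -> Phi x y.

Definition reg_normal (n m : nat) (Phi : 'rV[R]_n -> 'rV[R]_m -> Prop)
    (x : 'rV[R]_n) (y : 'rV[R]_m) (xs : 'rV[R]_n) (ys : 'rV[R]_m) : Prop :=
  Phi x y /\
  forall eps : R, 0 < eps -> exists delta : R, 0 < delta /\
    forall x' y', Phi x' y' -> pnorm (x' - x) (y' - y) < delta ->
      dotv xs (x' - x) + dotv ys (y' - y) <= eps * pnorm (x' - x) (y' - y).

Definition lim_normal (n m : nat) (Phi : 'rV[R]_n -> 'rV[R]_m -> Prop)
    (x : 'rV[R]_n) (y : 'rV[R]_m) (xs : 'rV[R]_n) (ys : 'rV[R]_m) : Prop :=
  Phi x y /\
  exists (xk : nat -> 'rV[R]_n) (yk : nat -> 'rV[R]_m)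
         (xsk : nat -> 'rV[R]_n) (ysk : nat -> 'rV[R]_m),
    (forall k, reg_normal Phi (xk k) (yk k) (xsk k) (ysk k)) /\
    cvgv xk x /\ cvgv yk y /\ cvgv xsk xs /\ cvgv ysk ys.

Definition reg_coderiv (n m : nat) (Phi : 'rV[R]_n -> 'rV[R]_m -> Prop)
    (x : 'rV[R]_n) (y : 'rV[R]_m) (ys : 'rV[R]_m) (xs : 'rV[R]_n) : Prop :=
  reg_normal Phi x y xs (- ys).

Definition lim_coderiv (n m : nat) (Phi : 'rV[R]_n -> 'rV[R]_m -> Prop)
    (x : 'rV[R]_n) (y : 'rV[R]_m) (ys : 'rV[R]_m) (xs : 'rV[R]_n) : Prop :=
  lim_normal Phi x y xs (- ys).

Definition in_im_lim_coderiv (n m : nat) (Phi : 'rV[R]_n -> 'rV[R]_m -> Prop)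
    (x : 'rV[R]_n) (y : 'rV[R]_m) (xs : 'rV[R]_n) : Prop :=
  exists ys : 'rV[R]_m, lim_coderiv Phi x y ys xs.

Definition reg_subdiff (n : nat) (phi : 'rV[R]_n -> R) (x xs : 'rV[R]_n) : Prop :=
  forall eps : R, 0 < eps -> exists delta : R, 0 < delta /\
    forall x', enorm (x' - x) < delta ->
      phi x' - phi x - dotv xs (x' - x) >= - (eps * enorm (x' - x)).

Definition lim_subdiff (n : nat) (phi : 'rV[R]_n -> R) (x xs : 'rV[R]_n) : Prop :=
  exists (xk xsk : nat -> 'rV[R]_n),
    (forall k, reg_subdiff phi (xk k) (xsk k)) /\
    cvgv xk x /\ (fun k => phi (xk k)) @ \oo --> phi x /\ cvgv xsk xs.

Definition local_minimizer (n m : nat) (phi : 'rV[R]_n -> R)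
    (Phi : 'rV[R]_n -> 'rV[R]_m -> Prop) (ybar : 'rV[R]_m) (xbar : 'rV[R]_n) : Prop :=
  Phi xbar ybar /\ exists delta : R, 0 < delta /\
    forall x, Phi x ybar -> enorm (x - xbar) < delta -> phi xbar <= phi x.

Definition critical_direction (n m : nat) (phi : 'rV[R]_n -> R)
    (Phi : 'rV[R]_n -> 'rV[R]_m -> Prop) (xbar : 'rV[R]_n) (ybar : 'rV[R]_m)
    (u : 'rV[R]_n) : Prop :=
  unit_sphere u /\
  exists (uk : nat -> 'rV[R]_n) (vk : nat -> 'rV[R]_m) (tk : nat -> R),
    cvgv uk u /\ cvgv vk 0 /\ (forall k, 0 < tk k) /\ tk @ \oo --> (0 : R) /\
    (forall k, Phi (xbar + tk k *: uk k) (ybar + tk k *: vk k)) /\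
    (forall eps : R, 0 < eps -> exists N : nat, forall k, (N <= k)%N ->
       (phi (xbar + tk k *: uk k) - phi xbar) / tk k <= eps).

Definition asymp_regular (n m : nat) (Phi : 'rV[R]_n -> 'rV[R]_m -> Prop)
    (xbar : 'rV[R]_n) (ybar : 'rV[R]_m) (u : 'rV[R]_n) : Prop :=
  forall (xk : nat -> 'rV[R]_n) (yk : nat -> 'rV[R]_m) (xsk : nat -> 'rV[R]_n)
         (lamk : nat -> 'rV[R]_m) (xs : 'rV[R]_n) (ys : 'rV[R]_m),
    (forall k, Phi (xk k) (yk k)) ->
    (forall k, ~ Phi (xk k) ybar) ->
    (forall k, yk k <> ybar) ->
    (forall k, reg_coderiv Phi (xk k) (yk k) (lamk k) (xsk k)) ->
    cvgv xk xbar -> cvgv yk ybar -> cvgv xsk xs ->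
    cvgv (fun k => (enorm (xk k - xbar))^-1 *: (xk k - xbar)) u ->
    cvgv (fun k => (enorm (xk k - xbar))^-1 *: (yk k - ybar)) 0 ->
    (fun k => enorm (lamk k)) @ \oo --> +oo ->
    cvgv (fun k => (enorm (yk k - ybar))^-1 *: (yk k - ybar)
                   - (enorm (lamk k))^-1 *: lamk k) 0 ->
    cvgv (fun k => (enorm (yk k - ybar) / enorm (xk k - xbar)) *: lamk k) ys ->
    in_im_lim_coderiv Phi xbar ybar xs.

Definition M_stationary (n m : nat) (phi : 'rV[R]_n -> R)
    (Phi : 'rV[R]_n -> 'rV[R]_m -> Prop) (xbar : 'rV[R]_n) (ybar : 'rV[R]_m) : Prop :=
  exists lam : 'rV[R]_m, exists a b : 'rV[R]_n,
    lim_subdiff phi xbar a /\ lim_coderiv Phi xbar ybar lam b /\ a + b = 0.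

End Defs.

(* Main.v *)
Require Import Defs.
From HB Require Import structures.
From mathcomp Require Import all_boot all_order all_algebra.
From mathcomp Require Import all_classical all_reals all_analysis.
From mathcomp Require Import ring lra.
Set Implicit Arguments. Unset Strict Implicit. Unset Printing Implicit Defensive.
Import Order.TTheory GRing.Theory Num.Theory.
Import numFieldNormedType.Exports.
Local Open Scope ring_scope.
Local Open Scope classical_set_scope.

Section LinAlg.
Variable R : realType.
Implicit Types (n : nat).

Lemma dotvC n (u v : 'rV[R]_n) : dotv u v = dotv v u.
Proof. by rewrite /dotv; apply: eq_bigr => i _; rewrite mulrC. Qed.

Lemma dotvDl n (u v w : 'rV[R]_n) : dotv (u + v) w = dotv u w + dotv v w.
Proof. by rewrite /dotv -big_split /=; apply: eq_bigr => i _; rewrite !mxE mulrDl. Qed.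

Lemma dotvZl n a (u w : 'rV[R]_n) : dotv (a *: u) w = a * dotv u w.
Proof. by rewrite /dotv mulr_sumr; apply: eq_bigr => i _; rewrite !mxE mulrA. Qed.

Lemma dotvNl n (u w : 'rV[R]_n) : dotv (- u) w = - dotv u w.
Proof. by rewrite -scaleN1r dotvZl mulN1r. Qed.

Lemma dotvBl n (u v w : 'rV[R]_n) : dotv (u - v) w = dotv u w - dotv v w.
Proof. by rewrite dotvDl dotvNl. Qed.

Lemma dotvDr n (u v w : 'rV[R]_n) : dotv w (u + v) = dotv w u + dotv w v.
Proof. by rewrite !(dotvC w) dotvDl. Qed.
Lemma dotvZr n a (u w : 'rV[R]_n) : dotv w (a *: u) = a * dotv w u.
Proof. by rewrite !(dotvC w) dotvZl. Qed.
Lemma dotvNr n (u w : 'rV[R]_n) : dotv w (- u) = - dotv w u.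
Proof. by rewrite !(dotvC w) dotvNl. Qed.
Lemma dotvBr n (u v w : 'rV[R]_n) : dotv w (u - v) = dotv w u - dotv w v.
Proof. by rewrite !(dotvC w) dotvBl. Qed.
Lemma dotv0l n (w : 'rV[R]_n) : dotv 0 w = 0.
Proof. by rewrite /dotv big1 // => i _; rewrite mxE mul0r. Qed.
Lemma dotv0r n (w : 'rV[R]_n) : dotv w 0 = 0.
Proof. by rewrite dotvC dotv0l. Qed.

Lemma dotv_ge0 n (u : 'rV[R]_n) : 0 <= dotv u u.
Proof. by rewrite /dotv sumr_ge0 // => i _; rewrite -expr2 sqr_ge0. Qed.

Lemma dotv_eq0 n (u : 'rV[R]_n) : dotv u u = 0 -> u = 0.
Proof.
move=> /eqP; rewrite /dotv psumr_eq0; last by move=> i _; rewrite -expr2 sqr_ge0.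
move=> /allP H; apply/rowP => i; rewrite mxE.
have /H : i \in index_enum 'I_n by rewrite mem_index_enum.
by rewrite /= mulf_eq0 orbb => /eqP.
Qed.

Lemma coord_le n (u : 'rV[R]_n) i : u ord0 i ^+ 2 <= dotv u u.
Proof.
rewrite /dotv (bigD1 i) //= -expr2 lerDl sumr_ge0 // => j _.
by rewrite -expr2 sqr_ge0.
Qed.

Lemma dotv_sq_sum n (u : 'rV[R]_n) : dotv u u <= (\sum_i `|u ord0 i|) ^+ 2.
Proof.
rewrite expr2 mulr_suml /dotv; apply: ler_sum => i _.
have h : `|u ord0 i * u ord0 i| = u ord0 i * u ord0 i.
  by rewrite ger0_norm // -expr2 sqr_ge0.
rewrite mulr_sumr (bigD1 i) //= -normrM h lerDl sumr_ge0 // => j _.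
Qed.

Lemma dotv_expand n (u v : 'rV[R]_n) :
  dotv (u + v) (u + v) = dotv u u + 2 * dotv u v + dotv v v.
Proof. rewrite !dotvDl !dotvDr (dotvC v u); ring. Qed.

Lemma dotv_expandB n (u v : 'rV[R]_n) :
  dotv (u - v) (u - v) = dotv u u - 2 * dotv u v + dotv v v.
Proof. rewrite !dotvBl !dotvBr (dotvC v u); ring. Qed.

Lemma CS2 n (u v : 'rV[R]_n) : dotv u v ^+ 2 <= dotv u u * dotv v v.
Proof.
have [v0|] := eqVneq (dotv v v) 0.
  by rewrite (dotv_eq0 v0) !dotv0r mulr0 expr0n.
move=> vn0.
have qv : 0 < dotv v v by rewrite lt_neqAle eq_sym vn0 dotv_ge0.
have := dotv_ge0 (dotv v v *: u - dotv u v *: v).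
rewrite dotv_expandB !dotvZl !dotvZr => H.
have : 0 <= dotv v v * (dotv v v * dotv u u - dotv u v ^+ 2).
  move: H; rewrite ?(dotvC v u); set a := dotv u u; set b := dotv v v; set c := dotv u v.
  move=> H; have -> : b * (b * a - c ^+ 2) = b * (b * a) - 2 * (b * (c * c)) + c * (c * b) by ring.
  exact: H.
by rewrite pmulr_rge0 // subr_ge0 mulrC.
Qed.

Lemma enorm_ge0 n (u : 'rV[R]_n) : 0 <= enorm u.
Proof. exact: sqrtr_ge0. Qed.

Lemma enorm_sq n (u : 'rV[R]_n) : enorm u ^+ 2 = dotv u u.
Proof. by rewrite /enorm sqr_sqrtr // dotv_ge0. Qed.

Lemma enorm_le n (u : 'rV[R]_n) a : 0 <= a -> dotv u u <= a ^+ 2 -> enorm u <= a.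
Proof. by move=> a0 H; rewrite -(ler_pXn2r (_ : (0 < 2)%N)) ?nnegrE ?enorm_ge0 // enorm_sq. Qed.

Lemma enorm_lt n (u : 'rV[R]_n) a : 0 <= a -> dotv u u < a ^+ 2 -> enorm u < a.
Proof. by move=> a0 H; rewrite -(ltr_pXn2r (_ : (0 < 2)%N)) ?nnegrE ?enorm_ge0 // enorm_sq. Qed.

Lemma le_enorm n (u : 'rV[R]_n) a : 0 <= a -> a ^+ 2 <= dotv u u -> a <= enorm u.
Proof. by move=> a0 H; rewrite -(ler_pXn2r (_ : (0 < 2)%N)) ?nnegrE ?enorm_ge0 // enorm_sq. Qed.

Lemma CS n (u v : 'rV[R]_n) : dotv u v <= enorm u * enorm v.
Proof.
rewrite (le_trans (ler_norm _)) //.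
rewrite -(ler_pXn2r (_ : (0 < 2)%N)) ?nnegrE ?mulr_ge0 ?enorm_ge0 //.
by rewrite exprMn !enorm_sq real_normK ?num_real // CS2.
Qed.

Lemma CSabs n (u v : 'rV[R]_n) : `|dotv u v| <= enorm u * enorm v.
Proof.
rewrite -(ler_pXn2r (_ : (0 < 2)%N)) ?nnegrE ?mulr_ge0 ?enorm_ge0 //.
by rewrite exprMn !enorm_sq real_normK ?num_real // CS2.
Qed.

Lemma enormD n (u v : 'rV[R]_n) : enorm (u + v) <= enorm u + enorm v.
Proof.
apply: enorm_le; first by rewrite addr_ge0 ?enorm_ge0.
rewrite dotv_expand sqrrD !enorm_sq lerD2r lerD2l mulr2n.
have := CS u v; lra.
Qed.

Lemma enormZ n a (u : 'rV[R]_n) : enorm (a *: u) = `|a| * enorm u.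
Proof.
rewrite /enorm dotvZl dotvZr mulrA -expr2 sqrtrM ?sqr_ge0 //.
by rewrite sqrtr_sqr.
Qed.

Lemma enormN n (u : 'rV[R]_n) : enorm (- u) = enorm u.
Proof. by rewrite -scaleN1r enormZ normrN1 mul1r. Qed.

Lemma enormBC n (u v : 'rV[R]_n) : enorm (u - v) = enorm (v - u).
Proof. by rewrite -enormN opprB. Qed.

Lemma enorm0 n : enorm (0 : 'rV[R]_n) = 0.
Proof. by rewrite /enorm dotv0l sqrtr0. Qed.

Lemma enorm_eq0 n (u : 'rV[R]_n) : enorm u = 0 -> u = 0.
Proof. by move=> H; apply: dotv_eq0; rewrite -enorm_sq H expr0n. Qed.

Lemma enormB n (u v : 'rV[R]_n) : enorm (u - v) <= enorm u + enorm v.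
Proof. by rewrite (le_trans (enormD _ _)) // enormN. Qed.

Lemma enorm_tri n (u v w : 'rV[R]_n) : enorm (u - w) <= enorm (u - v) + enorm (v - w).
Proof. by rewrite (le_trans _ (enormD _ _)) // addrA subrK. Qed.

Lemma enorm_rev n (u v : 'rV[R]_n) : enorm u - enorm v <= enorm (u - v).
Proof. by rewrite lerBlDr (le_trans _ (enormD _ _)) // subrK. Qed.

Lemma coord_enorm n (u : 'rV[R]_n) i : `|u ord0 i| <= enorm u.
Proof.
rewrite -(ler_pXn2r (_ : (0 < 2)%N)) ?nnegrE ?enorm_ge0 //.
by rewrite real_normK ?num_real // enorm_sq coord_le.
Qed.

Lemma enorm_sum n (u : 'rV[R]_n) : enorm u <= \sum_i `|u ord0 i|.
Proof. by apply: enorm_le; [rewrite sumr_ge0 // => i _| apply: dotv_sq_sum]. Qed.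

Lemma pnorm_sq n m (a : 'rV[R]_n) (b : 'rV[R]_m) :
  pnorm a b ^+ 2 = dotv a a + dotv b b.
Proof. by rewrite /pnorm sqr_sqrtr // addr_ge0 ?dotv_ge0. Qed.

Lemma pnorm_ge0 n m (a : 'rV[R]_n) (b : 'rV[R]_m) : 0 <= pnorm a b.
Proof. exact: sqrtr_ge0. Qed.

Lemma pnorm_l n m (a : 'rV[R]_n) (b : 'rV[R]_m) : enorm a <= pnorm a b.
Proof.
by apply: enorm_le; rewrite ?pnorm_ge0 // pnorm_sq lerDl dotv_ge0.
Qed.

Lemma pnorm_r n m (a : 'rV[R]_n) (b : 'rV[R]_m) : enorm b <= pnorm a b.
Proof.
by apply: enorm_le; rewrite ?pnorm_ge0 // pnorm_sq lerDr dotv_ge0.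
Qed.

End LinAlg.

Definition ev (P : nat -> Prop) := exists N, forall k, (N <= k)%N -> P k.
Definition incr (f : nat -> nat) := forall k, (f k < f k.+1)%N.

Lemma evI (P Q : nat -> Prop) : ev P -> ev Q -> ev (fun k => P k /\ Q k).
Proof.
move=> [N HN] [M HM]; exists (maxn N M) => k; rewrite geq_max => /andP[a b].
by split; [apply: HN | apply: HM].
Qed.

Lemma evW (P Q : nat -> Prop) : ev P -> (forall k, P k -> Q k) -> ev Q.
Proof. by move=> [N HN] H; exists N => k /HN /H. Qed.

Lemma evT (P : nat -> Prop) : (forall k, P k) -> ev P.
Proof. by move=> H; exists 0%N. Qed.

Lemma nearP (P : nat -> Prop) : (\forall k \near \oo, P k) <-> ev P.
Proof.
split; first by move=> [N _ HN]; exists N => k hk; apply: HN.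
by move=> [N HN]; exists N.
Qed.

Lemma incr_mono f : incr f -> forall j k, (j <= k)%N -> (f j <= f k)%N.
Proof.
move=> hf j k /subnK <-; elim: (k - j)%N => [|d IH] //.
by rewrite addSn (leq_trans IH) // ltnW.
Qed.

Lemma incr_ge f : incr f -> forall k, (k <= f k)%N.
Proof. by move=> hf; elim=> [|k IH] //; rewrite (leq_ltn_trans IH). Qed.

Lemma incr_comp f g : incr f -> incr g -> incr (f \o g).
Proof.
move=> hf hg k /=; have := hg k => h.
by rewrite (leq_trans (hf (g k))) // incr_mono.
Qed.

Lemma incr_id : incr id. Proof. by []. Qed.

Lemma incr_shift N : incr (fun k => k + N)%N.
Proof. by move=> k; rewrite addSn. Qed.

Lemma ev_sub (P : nat -> Prop) f : incr f -> ev P -> ev (fun k => P (f k)).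
Proof.
move=> hf [N HN]; exists N => k hk; apply: HN.
by rewrite (leq_trans hk) // incr_ge.
Qed.

Lemma ev_shift (P : nat -> Prop) : ev P -> exists N, forall k, P (k + N)%N.
Proof. by move=> [N HN]; exists N => k; apply: HN; rewrite leq_addl. Qed.

Section Lim.
Variable R : realType.

Lemma cvP (u : nat -> R) a :
  u @ \oo --> a <-> forall eps, 0 < eps -> ev (fun k => `|a - u k| < eps).
Proof.
rewrite cvgrPdist_lt; split => H eps /H; first by move/nearP.
by move=> h; apply/nearP.
Qed.

Lemma cvyP (u : nat -> R) :
  u @ \oo --> +oo <-> forall M, ev (fun k => M < u k).
Proof.
rewrite cvgryPgt; split => H M; first by move: (H M) => /nearP.
by apply/nearP.
Qed.

Lemma cvgvP n (s : nat -> 'rV[R]_n) l :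
  cvgv s l <-> forall eps, 0 < eps -> ev (fun k => enorm (s k - l) < eps).
Proof.
rewrite /cvgv cvP; split => H eps /H h; apply: (evW h) => k;
  by rewrite sub0r normrN ger0_norm ?enorm_ge0.
Qed.

Lemma cv_sub (u : nat -> R) (a : R) f : incr f -> u @ \oo --> a -> (fun k => u (f k)) @ \oo --> a.
Proof. by move=> hf /cvP H; apply/cvP => eps /H; apply: ev_sub. Qed.

Lemma cvgv_sub n (s : nat -> 'rV[R]_n) l f : incr f -> cvgv s l -> cvgv (fun k => s (f k)) l.
Proof. by move=> hf /cvgvP H; apply/cvgvP => eps /H; apply: ev_sub. Qed.

Lemma cvy_sub (u : nat -> R) f : incr f -> u @ \oo --> +oo -> (fun k => u (f k)) @ \oo --> +oo.
Proof. by move=> hf /cvyP H; apply/cvyP => M; apply: ev_sub (H M). Qed.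

Lemma cvgv_coord n (s : nat -> 'rV[R]_n) l i :
  cvgv s l -> (fun k => s k ord0 i) @ \oo --> l ord0 i.
Proof.
move=> /cvgvP H; apply/cvP => eps /H h; apply: (evW h) => k {}h.
by rewrite (le_lt_trans _ h) // enormBC (le_trans _ (coord_enorm _ i)) // !mxE.
Qed.

Lemma coord_cvgv n (s : nat -> 'rV[R]_n) (l : 'rV[R]_n) :
  (forall i, (fun k => s k ord0 i) @ \oo --> l ord0 i) -> cvgv s l.
Proof.
move=> H; apply/cvgvP => eps eps0.
have e1 : 0 < eps / (n.+1)%:R by rewrite divr_gt0 // ltr0n.
have H' : forall i, \forall k \near \oo, `|l ord0 i - s k ord0 i| < eps / (n.+1)%:R.
  by move=> i; move: (H i) => /cvP /(_ _ e1) /nearP.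
have hh : ev (fun k => forall i, `|l ord0 i - s k ord0 i| < eps / (n.+1)%:R).
  by apply/nearP; apply: filter_forall.
apply: (evW hh) => k hk.
apply: (le_lt_trans (enorm_sum _)).
apply: (@le_lt_trans _ _ (\sum_(i < n) eps / (n.+1)%:R)).
  apply: ler_sum => i _; rewrite !mxE distrC; exact: ltW.
rewrite sumr_const card_ord.
have hN : eps / (n.+1)%:R * (n.+1)%:R = eps by rewrite divfK // pnatr_eq0.
by rewrite -(mulr_natr (eps / _) n) -[X in _ < X]hN ltr_pM2l // ltr_nat.
Qed.

Lemma cvgvD n (s t : nat -> 'rV[R]_n) (a b : 'rV[R]_n) :
  cvgv s a -> cvgv t b -> cvgv (fun k => s k + t k) (a + b).
Proof.
move=> hs ht; apply: coord_cvgv => i.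
have -> : (fun k => (s k + t k) ord0 i) = (fun k => s k ord0 i + t k ord0 i).
  by apply: funext => k; rewrite mxE.
by rewrite mxE; apply: cvgD; apply: cvgv_coord.
Qed.

Lemma cvgvN n (s : nat -> 'rV[R]_n) (a : 'rV[R]_n) : cvgv s a -> cvgv (fun k => - s k) (- a).
Proof.
move=> hs; apply: coord_cvgv => i.
have -> : (fun k => (- s k) ord0 i) = (fun k => - s k ord0 i).
  by apply: funext => k; rewrite mxE.
by rewrite mxE; apply: cvgN; apply: cvgv_coord.
Qed.

Lemma cvgvZ n (c : nat -> R) (s : nat -> 'rV[R]_n) (a : R) (b : 'rV[R]_n) :
  c @ \oo --> a -> cvgv s b -> cvgv (fun k => c k *: s k) (a *: b).
Proof.
move=> hc hs; apply: coord_cvgv => i.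
have -> : (fun k => (c k *: s k) ord0 i) = (fun k => c k * s k ord0 i).
  by apply: funext => k; rewrite mxE.
by rewrite mxE; apply: cvgM => //; apply: cvgv_coord.
Qed.

Lemma cvgv_cst n (a : 'rV[R]_n) : cvgv (fun _ => a) a.
Proof. by apply/cvgvP => eps e0; apply: evT => k; rewrite subrr enorm0. Qed.

Lemma cvgv_ext n (s t : nat -> 'rV[R]_n) (a : 'rV[R]_n) : (forall k, s k = t k) -> cvgv s a -> cvgv t a.
Proof. by move=> H; have -> : t = s by apply: funext => k; rewrite H. Qed.

Lemma cvgvB0 n (s : nat -> 'rV[R]_n) (a : 'rV[R]_n) : cvgv s a <-> cvgv (fun k => s k - a) 0.
Proof.
rewrite !cvgvP; split => H eps /H h; apply: (evW h) => k; by rewrite subr0.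
Qed.

Lemma cvgv_enorm n (s : nat -> 'rV[R]_n) (a : 'rV[R]_n) : cvgv s a -> (fun k => enorm (s k)) @ \oo --> enorm a.
Proof.
move=> /cvgvP H; apply/cvP => eps /H h; apply: (evW h) => k {}h.
apply: le_lt_trans h; have h1 := enorm_rev (s k) a; have h2 := enorm_rev a (s k).
rewrite enormBC in h2; rewrite ler_norml; apply/andP; split; lra.
Qed.

Lemma cvgv_squeeze n (s : nat -> 'rV[R]_n) (a : 'rV[R]_n) (u : nat -> R) :
  ev (fun k => enorm (s k - a) <= u k) -> u @ \oo --> 0 -> cvgv s a.
Proof.
move=> hev /cvP hu; apply/cvgvP => eps /hu h; apply: (evW (evI hev h)) => k [h1 h2].
by apply: (le_lt_trans h1); move: h2; rewrite sub0r normrN; apply: le_lt_trans; apply: ler_norm.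
Qed.

Lemma cv_squeeze (u v : nat -> R) :
  ev (fun k => `|u k| <= v k) -> v @ \oo --> 0 -> u @ \oo --> 0.
Proof.
move=> hev /cvP hv; apply/cvP => eps /hv h; apply: (evW (evI hev h)) => k [h1 h2].
rewrite sub0r normrN; apply: (le_lt_trans h1); move: h2; rewrite sub0r normrN.
by apply: le_lt_trans; apply: ler_norm.
Qed.

Lemma cv_le (u v : nat -> R) (a b : R) :
  ev (fun k => u k <= v k) -> u @ \oo --> a -> v @ \oo --> b -> a <= b.
Proof.
move=> hev /cvP hu /cvP hv; apply/ler_addgt0Pr => eps e0.
have e2 : 0 < eps / 2 by rewrite divr_gt0.
have [N HN] := evI hev (evI (hu _ e2) (hv _ e2)).
have [h1 [h2 h3]] := HN N (leqnn N).
move: h2 h3; rewrite !ltr_norml => /andP[h2 h2'] /andP[h3 h3'].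
have -> : eps = eps / 2 + eps / 2 by rewrite -splitr.
lra.
Qed.

End Lim.

Section BW.
Variable R : realType.

Lemma bw_R (u : nat -> R) M : (forall k, `|u k| <= M) ->
  exists f, incr f /\ exists a : R, (fun k => u (f k)) @ \oo --> a.
Proof.
move=> hM.
have bnd : bounded_fun u.
  exists M; split; first exact: num_real.
  by move=> x hx y _; rewrite /= (le_trans (hM y)) // ltW.
have [f hf /cvg_ex [a ha]] := bolzano_weierstrass bnd.
exists f; split; last by exists a.
move=> k; rewrite ltnNge.
have := hf k.+1 k; rewrite /Order.le /= => ->; by rewrite ltnn.
Qed.

End BW.

Section BW2.
Variable R : realType.

Lemma bw_rV n (s : nat -> 'rV[R]_n) M : (forall k, enorm (s k) <= M) ->
  exists f, incr f /\ exists l, cvgv (fun k => s (f k)) l.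
Proof.
move=> hM.
have coordM : forall k i, `|s k ord0 i| <= M.
  by move=> k i; apply: le_trans (coord_enorm _ i) (hM k).
have step : forall j, exists f, incr f /\ forall i : 'I_n, (i < j)%N ->
    exists a : R, (fun k => s (f k) ord0 i) @ \oo --> a.
  elim=> [|j [f [hf IH]]]; first by exists id; split => // i.
  have [hj|hj] := ltnP j n; last first.
    exists f; split => // i hi; apply: IH; exact: leq_trans (ltn_ord i) hj.
  have [g [hg [a ha]]] := bw_R (u := fun k => s (f k) ord0 (Ordinal hj)) (M := M)
     (fun k => coordM _ _).
  exists (fun k => f (g k)); split; first exact: incr_comp.
  move=> i; rewrite ltnS leq_eqVlt => /orP[/eqP ei|hi].
    exists a; have -> : i = Ordinal hj by apply: val_inj.
    exact: ha.
  have [b hb] := IH i hi; exists b.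
  exact: (cv_sub (u := fun k => s (f k) ord0 i)).
have [f [hf H]] := step n.
have [c hc] := boolp.choice (fun i : 'I_n => H i (ltn_ord i)).
exists f; split => //; exists (\row_i c i).
by apply: coord_cvgv => i; rewrite mxE; apply: hc.
Qed.

End BW2.

Section Main.
Variable R : realType.
Variables (n m : nat) (phi : 'rV[R]_n -> R) (Phi : 'rV[R]_n -> 'rV[R]_m -> Prop).
Variables (xbar : 'rV[R]_n) (ybar : 'rV[R]_m) (L r : R).
Hypothesis Hr : 0 < r.
Hypothesis HL : 0 < L.
Hypothesis Hlip : forall y z, enorm (y - xbar) <= r -> enorm (z - xbar) <= r ->
  `|phi y - phi z| <= L * enorm (y - z).
Hypothesis Hfeas : Phi xbar ybar.
Hypothesis Hloc : forall x, Phi x ybar -> enorm (x - xbar) <= r -> phi xbar <= phi x.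
Hypothesis Hcl : closed_graph Phi.

Definition q k (v : 'rV[R]_k) := dotv v v.

Definition Sf x y z := Phi x y /\ enorm (x - xbar) <= r /\ enorm (y - ybar) <= 1
  /\ enorm (z - xbar) <= r.

Definition F (c : R) x y z :=
  phi z + q (z - xbar) + c ^+ 2 * q (z - x) + c * q (y - ybar).

Definition IsMin c x y z :=
  Sf x y z /\ forall x' y' z', Sf x' y' z' -> F c x y z <= F c x' y' z'.

Lemma q_ge0 k (v : 'rV[R]_k) : 0 <= q v.
Proof. exact: dotv_ge0. Qed.

Lemma qE k (v : 'rV[R]_k) : q v = enorm v ^+ 2.
Proof. by rewrite enorm_sq. Qed.

Lemma Sf0 : Sf xbar ybar xbar.
Proof. by rewrite /Sf !subrr !enorm0; split => //; split; [exact: ltW|split=> //; exact: ltW]. Qed.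

Lemma phi_lb z : enorm (z - xbar) <= r -> phi xbar - L * r <= phi z.
Proof.
move=> hz; have := Hlip hz (_ : enorm (xbar - xbar) <= r).
rewrite subrr enorm0 => /(_ (ltW Hr)) h.
have h2 : L * enorm (z - xbar) <= L * r by rewrite ler_pM2l.
move: h; rewrite ler_norml => /andP[h3 _]; lra.
Qed.

Lemma phi_cont (s : nat -> 'rV[R]_n) a : (forall k, enorm (s k - xbar) <= r) ->
  enorm (a - xbar) <= r -> cvgv s a -> (fun k => phi (s k)) @ \oo --> phi a.
Proof.
move=> hs ha /cvgvP H; apply/cvP => eps e0.
have e1 : 0 < eps / L by rewrite divr_gt0.
apply: (evW (H _ e1)) => k hk.
rewrite distrC (le_lt_trans (Hlip (hs k) ha)) //.
by rewrite -ltr_pdivlMl // mulrC.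
Qed.

Lemma q_cont k (s : nat -> 'rV[R]_k) a : cvgv s a -> (fun j => q (s j)) @ \oo --> q a.
Proof.
move=> h; have := cvgv_enorm h => h2.
have -> : (fun j => q (s j)) = (fun j => enorm (s j) * enorm (s j)).
  by apply: funext => j; rewrite qE expr2.
by rewrite qE expr2; apply: cvgM.
Qed.

Lemma Sf_closed (X : nat -> 'rV[R]_n) (Y : nat -> 'rV[R]_m) Z x y z :
  (forall k, Sf (X k) (Y k) (Z k)) -> cvgv X x -> cvgv Y y -> cvgv Z z -> Sf x y z.
Proof.
move=> hS hX hY hZ; split; first by apply: (Hcl (xk := X) (yk := Y)) => // k; case: (hS k).
have lim1 : forall k (s : nat -> 'rV[R]_k) a b B, (forall j, enorm (s j - b) <= B) ->
    cvgv s a -> enorm (a - b) <= B.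
  move=> k s a b B hB hs.
  have hc : cvgv (fun j => s j - b) (a - b) by apply: cvgvD => //; apply: cvgv_cst.
  apply: (cv_le (u := fun j => enorm (s j - b)) (v := fun => B)) (cvgv_enorm hc) (cvg_cst _).
  by apply: evT.
split; first by apply: (lim1 _ X) hX => j; case: (hS j) => _ [].
split; first by apply: (lim1 _ Y) hY => j; case: (hS j) => _ [_ []].
by apply: (lim1 _ Z) hZ => j; case: (hS j) => _ [_ [_]].
Qed.

Lemma F_cont c (X : nat -> 'rV[R]_n) (Y : nat -> 'rV[R]_m) Z x y z :
  (forall k, Sf (X k) (Y k) (Z k)) -> cvgv X x -> cvgv Y y -> cvgv Z z ->
  (fun k => F c (X k) (Y k) (Z k)) @ \oo --> F c x y z.
Proof.
move=> hS hX hY hZ.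
have hs := Sf_closed hS hX hY hZ.
have c1 : cvgv (fun k => Z k - xbar) (z - xbar) by apply: cvgvD => //; apply: cvgv_cst.
have c2 : cvgv (fun k => Z k - X k) (z - x) by apply: cvgvD => //; apply: cvgvN.
have c3 : cvgv (fun k => Y k - ybar) (y - ybar) by apply: cvgvD => //; apply: cvgv_cst.
apply: cvgD; [apply: cvgD; [apply: cvgD|]|].
- apply: phi_cont => //; last by case: hs => _ [_ [_]].
  by move=> k; case: (hS k) => _ [_ [_]].
- exact: q_cont.
- by apply: cvgM; [apply: cvg_cst | apply: q_cont].
- by apply: cvgM; [apply: cvg_cst | apply: q_cont].
Qed.


Lemma harm_cvg : (fun k : nat => (k.+1%:R)^-1 : R) @ \oo --> 0.
Proof. exact: cvg_harmonic. Qed.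

Lemma exists_min c : 0 <= c -> exists x y z, IsMin c x y z.
Proof.
move=> c0.
set V := [set t | exists x y z, Sf x y z /\ t = F c x y z].
have lbF : forall x y z, Sf x y z -> phi xbar - L * r <= F c x y z.
  move=> x y z [_ [_ [_ hz]]]; rewrite /F.
  have := phi_lb hz; have := q_ge0 (z - xbar); have := q_ge0 (z - x).
  have := q_ge0 (y - ybar) => h1 h2 h3 h4.
  have h5 : 0 <= c ^+ 2 * q (z - x) by rewrite mulr_ge0 // sqr_ge0.
  have h6 : 0 <= c * q (y - ybar) by rewrite mulr_ge0.
  lra.
have hinf : has_inf V.
  split; first by exists (F c xbar ybar xbar), xbar, ybar, xbar; split => //; exact: Sf0.
  by exists (phi xbar - L * r) => t [x [y [z [hs ->]]]]; apply: lbF.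
have hk : forall k : nat, exists p : 'rV[R]_n * 'rV[R]_m * 'rV[R]_n,
    Sf p.1.1 p.1.2 p.2 /\ F c p.1.1 p.1.2 p.2 < inf V + (k.+1%:R)^-1.
  move=> k; have e0 : 0 < (k.+1%:R)^-1 :> R by rewrite invr_gt0 ltr0n.
  have [t [x [y [z [hs ->]]]] ht] := inf_adherent e0 hinf.
  by exists (x, y, z).
have [P hP] := boolp.choice hk.
set X := fun k => (P k).1.1; set Y := fun k => (P k).1.2; set Z := fun k => (P k).2.
have hS : forall k, Sf (X k) (Y k) (Z k) by move=> k; case: (hP k).
have bnd : forall k (v a : 'rV[R]_k) B, enorm (v - a) <= B -> enorm v <= B + enorm a.
  move=> k v a B h; rewrite (le_trans _ (lerD h (lexx _))) //.
  by rewrite (le_trans _ (enormD _ _)) // subrK.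
have [f1 [hf1 [x hx]]] := bw_rV (M := r + enorm xbar) (s := X)
  (fun k => bnd _ _ _ _ (proj1 (proj2 (hS k)))).
have [f2 [hf2 [y hy]]] := bw_rV (M := 1 + enorm ybar) (s := fun k => Y (f1 k))
  (fun k => bnd _ _ _ _ (proj1 (proj2 (proj2 (hS (f1 k)))))).
have [f3 [hf3 [z hz]]] := bw_rV (M := r + enorm xbar) (s := fun k => Z (f1 (f2 k)))
  (fun k => bnd _ _ _ _ (proj2 (proj2 (proj2 (hS (f1 (f2 k))))))).
set g := fun k => f1 (f2 (f3 k)).
have hg : incr g by apply: incr_comp => //; apply: incr_comp.
have cX : cvgv (fun k => X (g k)) x.
  by apply: (cvgv_sub (s := fun k => X (f1 k))) => //; apply: incr_comp.
have cY : cvgv (fun k => Y (g k)) y by apply: (cvgv_sub (s := fun k => Y (f1 (f2 k)))).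
have cZ : cvgv (fun k => Z (g k)) z by [].
have hS' : forall k, Sf (X (g k)) (Y (g k)) (Z (g k)) by move=> k; apply: hS.
have hsl := Sf_closed hS' cX cY cZ.
exists x, y, z; split => // x' y' z' hs'.
have le1 : F c x y z <= inf V.
  apply: (cv_le (u := fun k => F c (X (g k)) (Y (g k)) (Z (g k)))
    (v := fun k => inf V + ((g k).+1%:R)^-1)).
  - apply: evT => k; exact: ltW (proj2 (hP (g k))).
  - exact: F_cont.
  - rewrite -[X in _ --> X]addr0; apply: cvgD; first exact: cvg_cst.
    exact: (cv_sub (u := fun k : nat => (k.+1%:R)^-1 : R) hg harm_cvg).
apply: (le_trans le1); apply: (ge_inf (proj2 hinf)).
by exists x', y', z'.
Qed.


Definition av c x z := (-2) *: (z - xbar) + (- (2 * c ^+ 2)) *: (z - x).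
Definition bv c (x z : 'rV[R]_n) := (2 * c ^+ 2) *: (z - x).
Definition lv c (y : 'rV[R]_m) := (2 * c) *: (y - ybar).

Lemma q0 k : q (0 : 'rV[R]_k) = 0.
Proof. by rewrite /q dotv0l. Qed.

Lemma ineqI c x y z : IsMin c x y z ->
  q (z - xbar) + c ^+ 2 * q (z - x) + c * q (y - ybar) <= phi xbar - phi z.
Proof.
move=> [_ H]; have := H _ _ _ Sf0; rewrite /F !subrr !q0 !mulr0 !addr0 => h.
lra.
Qed.

Lemma optA c x y z : IsMin c x y z -> 0 <= c -> enorm (z - xbar) < r ->
  reg_subdiff phi z (av c x z).
Proof.
move=> [hS H] c0 hz eps e0.
have d0 : 0 < r - enorm (z - xbar) by rewrite subr_gt0.
have c1 : 0 < 1 + c ^+ 2 by rewrite ltr_pwDl // sqr_ge0.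
have d1 : 0 < eps / (1 + c ^+ 2) by rewrite divr_gt0.
exists (Num.min (r - enorm (z - xbar)) (eps / (1 + c ^+ 2))); split.
  by rewrite lt_min d0 d1.
move=> z' hz'; move: hz'; rewrite lt_min => /andP[hz1 hz2].
have hs' : Sf x y z'.
  case: hS => [a [b [c' _]]]; split => //; split => //; split => //.
  rewrite (le_trans (enorm_tri _ z _)) //; apply: ltW; lra.
have := H _ _ _ hs'; rewrite /F.
set h := z' - z.
have e1 : z' - xbar = h + (z - xbar) by rewrite /h addrA subrK.
have e2 : z' - x = h + (z - x) by rewrite /h addrA subrK.
have E1 : q (z' - xbar) = q h + 2 * dotv h (z - xbar) + q (z - xbar).
  by rewrite e1 /q dotv_expand.
have E2 : q (z' - x) = q h + 2 * dotv h (z - x) + q (z - x).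
  by rewrite e2 /q dotv_expand.
rewrite E1 E2 => hmin.
rewrite /av dotvDl !dotvZl (dotvC (z - xbar)) (dotvC (z - x)).
rewrite /q in hmin.
have hh : (1 + c ^+ 2) * enorm h <= eps.
  by rewrite mulrC -ler_pdivlMr // ltW.
have hq : (1 + c ^+ 2) * dotv h h <= eps * enorm h.
  by rewrite -enorm_sq expr2 mulrA; apply: ler_wpM2r; [exact: enorm_ge0| exact: hh].
lra.
Qed.


Lemma optB c x y z : IsMin c x y z -> 1 <= c -> enorm (x - xbar) < r ->
  enorm (y - ybar) < 1 -> reg_coderiv Phi x y (lv c y) (bv c x z).
Proof.
move=> [hS H] c1 hxi hyi; split; first by case: hS.
move=> eps e0.
have d0 : 0 < r - enorm (x - xbar) by rewrite subr_gt0.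
have d0' : 0 < 1 - enorm (y - ybar) by rewrite subr_gt0.
have c2 : 0 < c ^+ 2 by rewrite exprn_gt0 // (lt_le_trans ltr01).
have d1 : 0 < eps / c ^+ 2 by rewrite divr_gt0.
exists (Num.min (Num.min (r - enorm (x - xbar)) (1 - enorm (y - ybar))) (eps / c ^+ 2)).
split; first by rewrite !lt_min d0 d0' d1.
move=> x' y' hP; rewrite !lt_min => /andP[/andP[hp1 hp2] hp3].
set p := pnorm (x' - x) (y' - y) in hp1 hp2 hp3 *.
have ex := pnorm_l (x' - x) (y' - y); have ey := pnorm_r (x' - x) (y' - y).
rewrite -/p in ex ey.
have hs' : Sf x' y' z.
  case: hS => [a [b [c' d]]]; split => //; split.
    rewrite (le_trans (enorm_tri _ x _)) //; apply: ltW; lra.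
  split => //; rewrite (le_trans (enorm_tri _ y _)) //; apply: ltW; lra.
have := H _ _ _ hs'; rewrite /F.
set hx := x' - x; set hy := y' - y.
have e1 : z - x' = (z - x) - hx by rewrite /hx opprB addrA subrK.
have e2 : y' - ybar = hy + (y - ybar) by rewrite /hy addrA subrK.
have E1 : q (z - x') = q (z - x) - 2 * dotv (z - x) hx + q hx.
  by rewrite e1 /q dotv_expandB.
have E2 : q (y' - ybar) = q hy + 2 * dotv hy (y - ybar) + q (y - ybar).
  by rewrite e2 /q dotv_expand.
rewrite E1 E2 => hmin.
rewrite /bv /lv dotvNl !dotvZl (dotvC (y - ybar)).
have hq : q hx + q hy = p ^+ 2 by rewrite /p pnorm_sq.
have hcq : c * q hy <= c ^+ 2 * q hy.
  by rewrite ler_wpM2r ?q_ge0 // expr2 ler_peMl // (le_trans ler01).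
have hp0 : 0 <= p by apply: pnorm_ge0.
have hp : c ^+ 2 * p ^+ 2 <= eps * p.
  rewrite expr2 mulrA; apply: ler_wpM2r => //.
  by rewrite mulrC -ler_pdivlMr // ltW.
have hq2 : c ^+ 2 * (q hx + q hy) = c ^+ 2 * q hx + c ^+ 2 * q hy by ring.
rewrite hq in hq2.
lra.
Qed.

Lemma notfeas c x y z : IsMin c x y z -> 0 < c -> y != ybar -> ~ Phi x ybar.
Proof.
move=> [[hP [hx [hy hz]]] H] c0 hne hxb.
have hs : Sf x ybar z by split => //; split => //; rewrite subrr enorm0; split => //.
have := H _ _ _ hs; rewrite /F subrr q0 mulr0 addr0 => h.
have h1 : c * q (y - ybar) <= 0 by lra.
have h2 : q (y - ybar) = 0.
  by apply/eqP; rewrite eq_le q_ge0 andbT -(pmulr_rle0 _ c0).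
move: hne; rewrite -subr_eq0 => /eqP; apply; exact: dotv_eq0.
Qed.

Lemma boundA z a : reg_subdiff phi z a -> enorm (z - xbar) < r -> enorm a <= L + 1.
Proof.
move=> H hz.
have [delta [d0 hd]] := H 1 ltr01.
have [a0|an0] := eqVneq a 0; first by rewrite a0 enorm0 addr_ge0 // ltW.
have ea : 0 < enorm a.
  rewrite lt_neqAle enorm_ge0 andbT; apply/eqP => h; move: an0.
  by rewrite (enorm_eq0 (esym h)) eqxx.
have dr : 0 < r - enorm (z - xbar) by rewrite subr_gt0.
set s := Num.min delta (r - enorm (z - xbar)) / 2.
have s0 : 0 < s by rewrite /s divr_gt0 // lt_min d0 dr.
have sd : s < delta.
  have : Num.min delta (r - enorm (z - xbar)) <= delta by rewrite ge_min lexx.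
  rewrite /s; lra.
have sr : s < r - enorm (z - xbar).
  have : Num.min delta (r - enorm (z - xbar)) <= r - enorm (z - xbar).
    by rewrite ge_min lexx orbT.
  rewrite /s; lra.
set t := s / enorm a.
have t0 : 0 < t by rewrite divr_gt0.
have eh : enorm (t *: a) = s by rewrite enormZ gtr0_norm // /t divfK // gt_eqF.
have ez : z + t *: a - z = t *: a by rewrite addrAC subrr add0r.
have hz' : enorm ((z + t *: a) - z) = s by rewrite ez.
have := hd (z + t *: a); rewrite hz' => /(_ sd).
rewrite ez dotvZr mul1r.
have hq : t * dotv a a = s * enorm a by rewrite -enorm_sq /t expr2 mulrA divfK // gt_eqF.
rewrite hq => h1.
have hz2 : enorm (z + t *: a - xbar) <= r.
  rewrite (le_trans (enorm_tri _ z _)) // hz'; apply: ltW; lra.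
have := Hlip hz2 (ltW hz); rewrite hz' ler_norml => /andP[_ h2].
have : s * enorm a <= s * (L + 1) by lra.
by rewrite ler_pM2l.
Qed.


Definition Good (X : nat -> 'rV[R]_n) (Y : nat -> 'rV[R]_m) (Z : nat -> 'rV[R]_n)
  (c : nat -> R) :=
  (forall k, IsMin (c k) (X k) (Y k) (Z k)) /\ (forall k, 1 <= c k) /\
  (forall M, ev (fun k => M <= c k)) /\
  (forall k, enorm (X k - xbar) < r /\ enorm (Y k - ybar) < 1 /\ enorm (Z k - xbar) < r) /\
  cvgv X xbar /\ cvgv Y ybar /\ cvgv Z xbar.

Lemma Good_sub X Y Z c f : incr f -> Good X Y Z c ->
  Good (fun k => X (f k)) (fun k => Y (f k)) (fun k => Z (f k)) (fun k => c (f k)).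
Proof.
move=> hf [h1 [h2 [h3 [h4 [h5 [h6 h7]]]]]]; split => //; split => //; split.
  by move=> M; apply: (ev_sub (P := fun k => M <= c k)).
split => //; split; first exact: (cvgv_sub (s := X)).
by split; [apply: (cvgv_sub (s := Y)) | apply: (cvgv_sub (s := Z))].
Qed.

Lemma sq_small k (v : nat -> 'rV[R]_k) (w : nat -> R) :
  ev (fun j => q (v j) <= w j) -> w @ \oo --> 0 -> cvgv v 0.
Proof.
move=> hev /cvP hw; apply/cvgvP => eps e0.
have e2 : 0 < eps ^+ 2 by rewrite exprn_gt0.
apply: (evW (evI hev (hw _ e2))) => j [h1 h2].
rewrite subr0; apply: enorm_lt; first exact: ltW.
apply: (le_lt_trans h1); move: h2; rewrite sub0r normrN.
by apply: le_lt_trans; apply: ler_norm.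
Qed.

Lemma inv_cvg0 (u : nat -> R) : (forall M, ev (fun k => M <= u k)) ->
  (fun k => (u k)^-1) @ \oo --> 0.
Proof.
move=> H; apply/cvP => eps e0.
apply: (evW (H (eps^-1 + 1))) => k hk.
have u0 : 0 < u k by apply: lt_le_trans hk; rewrite ltr_pwDr // invr_ge0 ltW.
rewrite sub0r normrN gtr0_norm ?invr_gt0 //.
have h : eps^-1 < u k by apply: lt_le_trans hk; rewrite ltrDl.
rewrite -(ltr_pM2l e0) mulfV ?gt_eqF // in h.
by rewrite -(ltr_pM2r u0) mulVf ?gt_eqF // mulrC.
Qed.

Lemma cvg_ger (c : nat -> R) f : incr f -> (forall k, c k = (f k).+1%:R) ->
  forall M, ev (fun k => M <= c k).
Proof.
move=> hf hc M; have /nearP h := nbhs_infty_ger M.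
apply: (evW h) => k hk; rewrite hc (le_trans hk) // ler_nat.
by rewrite (leq_trans (incr_ge hf k)).
Qed.

Lemma Good_exists : exists X Y Z c, Good X Y Z c.
Proof.
have hk : forall k : nat, exists p : 'rV[R]_n * 'rV[R]_m * 'rV[R]_n,
    IsMin (k.+1%:R) p.1.1 p.1.2 p.2.
  move=> k; have [x [y [z h]]] := exists_min (ler0n R k.+1).
  by exists (x, y, z).
have [P hP] := boolp.choice hk.
set X0 := fun k => (P k).1.1; set Y0 := fun k => (P k).1.2; set Z0 := fun k => (P k).2.
have hM : forall k, IsMin (k.+1%:R) (X0 k) (Y0 k) (Z0 k) by [].
have bnd : forall k (v a : 'rV[R]_k) B, enorm (v - a) <= B -> enorm v <= B + enorm a.
  move=> k v a B h; rewrite (le_trans _ (lerD h (lexx _))) //.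
  by rewrite (le_trans _ (enormD _ _)) // subrK.
have [f0 [hf0 [z hz]]] := bw_rV (M := r + enorm xbar) (s := Z0)
  (fun k => bnd _ _ _ _ (proj2 (proj2 (proj2 (proj1 (hM k)))))).
set c := fun k => (f0 k).+1%:R : R.
have hc : forall k, 1 <= c k by move=> k; rewrite /c ler1n.
have hcM := cvg_ger hf0 (c := c) (fun k => erefl).
set X := fun k => X0 (f0 k); set Y := fun k => Y0 (f0 k); set Z := fun k => Z0 (f0 k).
have hMk : forall k, IsMin (c k) (X k) (Y k) (Z k) by move=> k; apply: hM.
have hS : forall k, Sf (X k) (Y k) (Z k) by move=> k; case: (hMk k).
have I1 : forall k, c k * q (Z k - X k) <= L * r.
  move=> k; have := ineqI (hMk k); have := phi_lb (proj2 (proj2 (proj2 (hS k)))).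
  have := q_ge0 (Z k - xbar); have := q_ge0 (Y k - ybar); have := q_ge0 (Z k - X k).
  move=> h1 h2 h3 h4 h5.
  have h6 : c k * q (Z k - X k) <= c k ^+ 2 * q (Z k - X k).
    by rewrite ler_wpM2r // expr2 ler_peMl // (le_trans ler01).
  have h7 : 0 <= c k * q (Y k - ybar) by rewrite mulr_ge0 // (le_trans ler01).
  lra.
have I2 : forall k, c k * q (Y k - ybar) <= L * r.
  move=> k; have := ineqI (hMk k); have := phi_lb (proj2 (proj2 (proj2 (hS k)))).
  have := q_ge0 (Z k - xbar); have := q_ge0 (Z k - X k).
  move=> h1 h2 h3 h4.
  have h7 : 0 <= c k ^+ 2 * q (Z k - X k) by rewrite mulr_ge0 // sqr_ge0.
  lra.
have inv0 := inv_cvg0 hcM.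
have Lr0 : 0 <= L * r by rewrite mulr_ge0 // ltW.
have small : forall k (v : nat -> 'rV[R]_k), (forall j, c j * q (v j) <= L * r) -> cvgv v 0.
  move=> k v hv; apply: (sq_small (w := fun j => L * r * (c j)^-1)).
    apply: evT => j; have cj : 0 < c j by apply: lt_le_trans (hc j).
    by rewrite mulrC ler_pdivlMl // mulrC.
  by rewrite -(mulr0 (L * r)); apply: cvgM => //; apply: cvg_cst.
have cZX := small _ _ I1; have cY0 := small _ _ I2.
have cZ : cvgv Z z by [].
have cX : cvgv X z.
  apply: (cvgv_ext (s := fun k => Z k - (Z k - X k))); first by move=> k; rewrite opprB addrC subrK.
  by rewrite -[X in cvgv _ X]subr0; apply: cvgvD => //; apply: cvgvN.
have cY : cvgv Y ybar.
  apply: (cvgv_ext (s := fun k => (Y k - ybar) + ybar)); first by move=> k; rewrite subrK.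
  by rewrite -[X in cvgv _ X]add0r; apply: cvgvD => //; apply: cvgv_cst.
have [hPz [hzr _]] := Sf_closed hS cX cY cZ.
have hloc := Hloc hPz hzr.
have lim1 : q (z - xbar) <= phi xbar - phi z.
  apply: (cv_le (u := fun k => q (Z k - xbar)) (v := fun k => phi xbar - phi (Z k))).
  - apply: evT => k; have := ineqI (hMk k).
    have := q_ge0 (Y k - ybar); have := q_ge0 (Z k - X k) => h1 h2 h3.
    have h4 : 0 <= c k ^+ 2 * q (Z k - X k) by rewrite mulr_ge0 // sqr_ge0.
    have h5 : 0 <= c k * q (Y k - ybar) by rewrite mulr_ge0 // (le_trans ler01).
    lra.
  - by apply: q_cont; apply: cvgvD => //; apply: cvgv_cst.
  - apply: cvgB; first exact: cvg_cst.
    apply: phi_cont => //; by move=> k; case: (hS k) => _ [_ [_]].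
have zx : z = xbar.
  have : q (z - xbar) = 0 by apply/eqP; rewrite eq_le q_ge0 andbT; lra.
  by move/dotv_eq0/eqP; rewrite subr_eq0 => /eqP.
rewrite zx in cX cZ.
have ev1 : ev (fun k => enorm (X k - xbar) < r /\ enorm (Y k - ybar) < 1 /\
    enorm (Z k - xbar) < r).
  move: cX cY cZ => /cvgvP h1 /cvgvP h2 /cvgvP h3.
  exact: evI (h1 _ Hr) (evI (h2 _ ltr01) (h3 _ Hr)).
have [N HN] := ev_shift ev1.
have hsh := incr_shift N.
exists (fun k => X (k + N)%N), (fun k => Y (k + N)%N), (fun k => Z (k + N)%N),
  (fun k => c (k + N)%N).
split; first by move=> k; apply: hMk.
split; first by move=> k; apply: hc.
split; first by move=> M; apply: (ev_sub (P := fun k => M <= c k)) hsh (hcM M).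
split; first by move=> k; apply: HN.
split; first exact: (cvgv_sub (s := X)).
split; first exact: (cvgv_sub (s := Y)).
exact: (cvgv_sub (s := Z)).
Qed.


Lemma freq_sub (P : nat -> Prop) : (forall N, exists k, (N <= k)%N /\ P k) ->
  exists f, incr f /\ forall k, P (f k).
Proof.
move=> H; have [g hg] := boolp.choice H.
pose f := fix f k := match k with 0%N => g 0%N | k'.+1 => g (f k').+1 end.
exists f; split; last by case => [|k] /=; [case: (hg 0%N) | case: (hg (f k).+1)].
by move=> k /=; case: (hg (f k).+1).
Qed.

Lemma not_ev (P : nat -> Prop) : ~ ev P -> forall N, exists k, (N <= k)%N /\ ~ P k.
Proof.
move=> H N; apply: contrapT => H2; apply: H; exists N => k hk.
by apply: contrapT => hP; apply: H2; exists k.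
Qed.

Lemma ABsum c x z : av c x z + bv c x z = (-2) *: (z - xbar).
Proof. by rewrite /av /bv -addrA (scaleNr (2 * c ^+ 2)) addNr addr0. Qed.

Lemma Good_int X Y Z c : Good X Y Z c -> forall k,
  [/\ IsMin (c k) (X k) (Y k) (Z k), 1 <= c k, enorm (X k - xbar) < r,
      enorm (Y k - ybar) < 1 & enorm (Z k - xbar) < r].
Proof.
move=> [h1 [h2 [_ [h4 _]]]] k; have [a [b d]] := h4 k.
by split.
Qed.

Lemma lim_sub_a X Y Z c a : Good X Y Z c ->
  cvgv (fun k => av (c k) (X k) (Z k)) a -> lim_subdiff phi xbar a.
Proof.
move=> G hA; have GI := Good_int G.
have [_ [_ [_ [_ [_ [_ hZ]]]]]] := G.
exists Z, (fun k => av (c k) (X k) (Z k)); split.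
  move=> k; have [hM c1 _ _ hz] := GI k; apply: optA hM _ hz.
  exact: le_trans ler01 c1.
split => //; split => //.
apply: phi_cont => //; last by rewrite subrr enorm0 ltW.
by move=> k; have [_ _ _ _ hz] := GI k; apply: ltW.
Qed.

Lemma lim_b X Y Z c a : Good X Y Z c ->
  cvgv (fun k => av (c k) (X k) (Z k)) a -> cvgv (fun k => bv (c k) (X k) (Z k)) (- a).
Proof.
move=> G hA; have [_ [_ [_ [_ [_ [_ hZ]]]]]] := G.
apply: (cvgv_ext (s := fun k => (-2) *: (Z k - xbar) - av (c k) (X k) (Z k))).
  by move=> k; rewrite -(ABsum (c k) (X k) (Z k)) addrAC subrr add0r.
have h0 : cvgv (fun k => (-2) *: (Z k - xbar)) ((-2 : R) *: 0).
  apply: (cvgvZ (c := fun _ => -2)); first exact: cvg_cst.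
  by move/cvgvB0: hZ.
rewrite scaler0 in h0; rewrite -[X in cvgv _ X]add0r.
by apply: cvgvD => //; apply: cvgvN.
Qed.

Lemma caseA X Y Z c a M : Good X Y Z c ->
  cvgv (fun k => av (c k) (X k) (Z k)) a ->
  (forall k, enorm (lv (c k) (Y k)) <= M) -> M_stationary phi Phi xbar ybar.
Proof.
move=> G hA hM.
have [f [hf [lam hl]]] := bw_rV hM.
have G2 := Good_sub hf G.
have hA2 : cvgv (fun k => av (c (f k)) (X (f k)) (Z (f k))) a.
  exact: (cvgv_sub (s := fun k => av (c k) (X k) (Z k))).
exists lam, a, (- a); split; first exact: lim_sub_a G2 hA2.
split; last by rewrite subrr.
split => //.
have GI := Good_int G2.
have [_ [_ [_ [_ [hX [hY _]]]]]] := G2.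
exists (fun k => X (f k)), (fun k => Y (f k)), (fun k => bv (c (f k)) (X (f k)) (Z (f k))),
  (fun k => - lv (c (f k)) (Y (f k))).
split.
  move=> k; have [hm c1 hx hy _] := GI k.
  exact: (optB (z := Z (f k)) hm c1 hx hy).
split => //; split => //; split; first exact: lim_b G2 hA2.
exact: cvgvN.
Qed.


Definition Cc := L + 1 + 2 * r.

Section Pt.
Variables (c : R) (x : 'rV[R]_n) (y : 'rV[R]_m) (z : 'rV[R]_n).
Hypotheses (hM : IsMin c x y z) (c1 : 1 <= c) (hx : enorm (x - xbar) < r)
  (hy : enorm (y - ybar) < 1) (hz : enorm (z - xbar) < r).

Let c0 : 0 <= c. Proof. exact: le_trans ler01 c1. Qed.

Lemma pF1 : c * enorm (y - ybar) ^+ 2 <= L * (enorm (x - xbar) + enorm (z - x)).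
Proof.
have h := ineqI hM; rewrite (qE (y - ybar)) in h.
have := q_ge0 (z - xbar); have := q_ge0 (z - x) => h1 h2.
have h3 : 0 <= c ^+ 2 * q (z - x) by rewrite mulr_ge0 // sqr_ge0.
have := Hlip (ltW hz) (_ : enorm (xbar - xbar) <= r).
rewrite subrr enorm0 => /(_ (ltW Hr)); rewrite ler_norml => /andP[h4 _].
have h5 := enorm_tri z x xbar.
have h6 : L * enorm (z - xbar) <= L * (enorm (z - x) + enorm (x - xbar)).
  by rewrite ler_pM2l.
lra.
Qed.

Lemma pF2 : c ^+ 2 * enorm (z - x) <= Cc.
Proof.
have hA := boundA (optA hM c0 hz) hz.
have e : (2 * c ^+ 2) *: (z - x) = (-2) *: (z - xbar) - av c x z.
  by rewrite -(ABsum c x z) addrAC subrr add0r.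
have := enormB ((-2) *: (z - xbar)) (av c x z); rewrite -e !enormZ.
rewrite ger0_norm ?mulr_ge0 ?sqr_ge0 // normrN ger0_norm // => h.
have h' : 2 * (c ^+ 2 * enorm (z - x)) <= 2 * enorm (z - xbar) + enorm (av c x z).
  by rewrite mulrA; exact: h.
have h2 : 0 <= c ^+ 2 * enorm (z - x) by rewrite mulr_ge0 ?sqr_ge0 ?enorm_ge0.
have Hr2 := Hr; have HL2 := HL; have hz2 := hz. rewrite /Cc; lra.
Qed.

Lemma pF3 : phi z <= phi xbar.
Proof.
have h := ineqI hM.
have := q_ge0 (z - xbar); have := q_ge0 (z - x); have := q_ge0 (y - ybar) => h1 h2 h3.
have h4 : 0 <= c ^+ 2 * q (z - x) by rewrite mulr_ge0 // sqr_ge0.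
have h5 : 0 <= c * q (y - ybar) by rewrite mulr_ge0.
lra.
Qed.

Lemma pF4 : phi x - phi z <= L * enorm (z - x).
Proof.
have := Hlip (ltW hx) (ltW hz); rewrite ler_norml enormBC => /andP[_ h]; exact: h.
Qed.

Lemma pF5 : enorm (lv c y) = 2 * c * enorm (y - ybar).
Proof. by rewrite /lv enormZ ger0_norm // mulr_ge0. Qed.

Lemma pcd : c * enorm (z - x) <= Cc.
Proof.
apply: le_trans pF2; rewrite ler_wpM2r ?enorm_ge0 // expr2 ler_peMl //.
Qed.

Lemma pkappa M : enorm (lv c y) > `|4 * L * (M + Cc)| + 1 -> M <= c * enorm (x - xbar).
Proof.
set T := `|4 * L * (M + Cc)| + 1; set l := enorm (lv c y) => hT.
have T1 : 1 <= T by rewrite /T lerDr.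
have hT2 : T * T < l * l by apply: ltr_pM => //; apply: le_trans T1.
have hl : l * l = 4 * c * (c * enorm (y - ybar) ^+ 2) by rewrite /l pF5; ring.
have h3 : c * (c * enorm (y - ybar) ^+ 2) <= c * (L * (enorm (x - xbar) + enorm (z - x))).
  by rewrite ler_wpM2l // pF1.
have h4 := pcd.
have h6 : L * (c * enorm (z - x)) <= L * Cc by rewrite ler_pM2l.
have h5 : 4 * L * (M + Cc) <= T by rewrite /T (le_trans (ler_norm _)) // lerDl.
have h7 : T <= T * T by rewrite ler_peMl // (le_trans ler01).
have : L * M <= L * (c * enorm (x - xbar)) by lra.
by rewrite ler_pM2l.
Qed.

Hypotheses (hl0 : 0 < enorm (lv c y)) (hk1 : 1 <= c * enorm (x - xbar)).

Lemma pos_e : 0 < enorm (x - xbar).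
Proof.
rewrite lt_neqAle enorm_ge0 andbT; apply/eqP => h; move: hk1.
by rewrite -h mulr0 ler10.
Qed.

Lemma pos_rho : 0 < enorm (y - ybar).
Proof.
rewrite lt_neqAle enorm_ge0 andbT; apply/eqP => h; move: hl0.
by rewrite pF5 -h mulr0 ltxx.
Qed.

Lemma pd_le : enorm (z - x) <= Cc * enorm (x - xbar).
Proof.
have he := pos_e; have c2 := pF2; have h1 := hk1; have cc := c1.
have hd := enorm_ge0 (z - x).
have t1 : 1 <= c ^+ 2 * enorm (x - xbar).
  apply: le_trans h1 _; rewrite expr2 -mulrA ler_peMl // (le_trans ler01) //.
have t2 : enorm (z - x) * 1 <= enorm (z - x) * (c ^+ 2 * enorm (x - xbar)).
  by rewrite ler_wpM2l.
have t3 : c ^+ 2 * enorm (z - x) * enorm (x - xbar) <= Cc * enorm (x - xbar).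
  by rewrite ler_wpM2r // ltW.
have : enorm (z - x) * (c ^+ 2 * enorm (x - xbar)) =
  c ^+ 2 * enorm (z - x) * enorm (x - xbar) by ring.
lra.
Qed.

Lemma pGv : (c * enorm (x - xbar)) ^+ 2 * q ((enorm (x - xbar))^-1 *: (y - ybar))
  <= L * (c * enorm (x - xbar)) + L * Cc.
Proof.
have he := pos_e; have hF1 := pF1; have hcd := pcd; have HL2 := HL.
rewrite /q dotvZl dotvZr -enorm_sq.
have -> : (c * enorm (x - xbar)) ^+ 2 * ((enorm (x - xbar))^-1 *
   ((enorm (x - xbar))^-1 * enorm (y - ybar) ^+ 2)) = c * (c * enorm (y - ybar) ^+ 2).
  by field; rewrite gt_eqF.
have t1 : c * (c * enorm (y - ybar) ^+ 2) <= c * (L * (enorm (x - xbar) + enorm (z - x))).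
  by rewrite ler_wpM2l.
have t2 : L * (c * enorm (z - x)) <= L * Cc by rewrite ler_wpM2l // ltW.
have : c * (L * (enorm (x - xbar) + enorm (z - x))) =
   L * (c * enorm (x - xbar)) + L * (c * enorm (z - x)) by ring.
lra.
Qed.

Lemma pGw : enorm ((enorm (y - ybar) / enorm (x - xbar)) *: lv c y) <= 2 * L + 2 * L * Cc.
Proof.
have he := pos_e; have hr := pos_rho; have hF1 := pF1; have hd := pd_le; have HL2 := HL.
rewrite enormZ pF5 ger0_norm ?divr_ge0 ?enorm_ge0 //.
rewrite -(ler_pM2r he).
have -> : enorm (y - ybar) / enorm (x - xbar) * (2 * c * enorm (y - ybar)) * enorm (x - xbar)
   = 2 * (c * enorm (y - ybar) ^+ 2) by field; rewrite gt_eqF.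
have t : L * enorm (z - x) <= L * (Cc * enorm (x - xbar)) by rewrite ler_wpM2l // ltW.
have : (2 * L + 2 * L * Cc) * enorm (x - xbar) = 2 * L * enorm (x - xbar) +
   2 * (L * (Cc * enorm (x - xbar))) by ring.
lra.
Qed.

Lemma pGc eps : 0 < eps -> L * Cc / eps <= c * enorm (x - xbar) ->
  phi x - phi xbar <= eps * enorm (x - xbar).
Proof.
move=> e0 hk.
have h3 := pF3; have h4 := pF4; have h2 := pF2; have HL2 := HL; have cc := c1.
have hd := enorm_ge0 (z - x).
have c0' : 0 < c by apply: lt_le_trans ltr01 c1.
have t1 : L * Cc <= eps * (c * enorm (x - xbar)).
  have e1 : L * Cc = L * Cc / eps * eps by rewrite divfK ?gt_eqF.
  have e2 : L * Cc / eps * eps <= c * enorm (x - xbar) * eps by rewrite ler_wpM2r // ltW.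
  lra.
have t2 : c * (L * enorm (z - x)) <= L * (c ^+ 2 * enorm (z - x)).
  have -> : L * (c ^+ 2 * enorm (z - x)) = c * (L * enorm (z - x)) * c by ring.
  rewrite ler_peMr //; apply: mulr_ge0; [exact: ltW | apply: mulr_ge0 => //; exact: ltW].
have t3 : L * (c ^+ 2 * enorm (z - x)) <= L * Cc by rewrite ler_wpM2l // ltW.
have t4 : c * (L * enorm (z - x)) <= c * (eps * enorm (x - xbar)).
  have : eps * (c * enorm (x - xbar)) = c * (eps * enorm (x - xbar)) by ring.
  lra.
rewrite ler_pM2l // in t4; lra.
Qed.

Lemma pdiff : (enorm (y - ybar))^-1 *: (y - ybar) - (enorm (lv c y))^-1 *: lv c y = 0.
Proof.
have hr := pos_rho; have c0' : 0 < c by apply: lt_le_trans ltr01 c1.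
rewrite pF5 /lv scalerA.
have -> : (2 * c * enorm (y - ybar))^-1 * (2 * c) = (enorm (y - ybar))^-1.
  by field; rewrite !gt_eqF.
by rewrite subrr.
Qed.

End Pt.


Hypothesis Hreg : forall u : 'rV[R]_n, critical_direction phi Phi xbar ybar u ->
  asymp_regular Phi xbar ybar u.

Definition Tail (X : nat -> 'rV[R]_n) (Y : nat -> 'rV[R]_m) (c : nat -> R) :=
  forall k, 0 < enorm (lv (c k) (Y k)) /\ 1 <= c k * enorm (X k - xbar).

Lemma kappa_div X Y Z c : Good X Y Z c ->
  (forall M, ev (fun k => M < enorm (lv (c k) (Y k)))) ->
  forall M, ev (fun k => M <= c k * enorm (X k - xbar)).
Proof.
move=> G hL M; have GI := Good_int G.
apply: (evW (hL (`|4 * L * (M + Cc)| + 1))) => k hk.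
have [hm c1 hx hy hz] := GI k; exact: pkappa hm c1 hz M hk.
Qed.

Lemma caseB_fin X Y Z c a u ys : Good X Y Z c ->
  cvgv (fun k => av (c k) (X k) (Z k)) a ->
  (forall M, ev (fun k => M < enorm (lv (c k) (Y k)))) -> Tail X Y c ->
  cvgv (fun k => (enorm (X k - xbar))^-1 *: (X k - xbar)) u ->
  cvgv (fun k => (enorm (Y k - ybar) / enorm (X k - xbar)) *: lv (c k) (Y k)) ys ->
  M_stationary phi Phi xbar ybar.
Proof.
move=> G hA hL hT hU hW.
have GI := Good_int G.
have [_ [_ [_ [_ [hX [hY _]]]]]] := G.
have hK := kappa_div G hL.
have he : forall k, 0 < enorm (X k - xbar) by move=> k; exact: pos_e (proj2 (hT k)).
have hK0 : forall k, 0 < c k * enorm (X k - xbar).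
  by move=> k; apply: lt_le_trans ltr01 (proj2 (hT k)).
have hi := inv_cvg0 hK.
have hV : cvgv (fun k => (enorm (X k - xbar))^-1 *: (Y k - ybar)) 0.
  apply: (sq_small (w := fun k => L * (c k * enorm (X k - xbar))^-1 +
     L * Cc * ((c k * enorm (X k - xbar))^-1 * (c k * enorm (X k - xbar))^-1))).
    apply: evT => k; have [hm c1 hx hy hz] := GI k.
    have hv := pGv hm c1 hz (proj2 (hT k)).
    set K := c k * enorm (X k - xbar) in hv *.
    have K0 : 0 < K := hK0 k.
    rewrite -(ler_pM2l (_ : 0 < K ^+ 2)); last by rewrite exprn_gt0.
    apply: (le_trans hv); rewrite le_eqVlt; apply/orP; left; apply/eqP.
    by field; rewrite gt_eqF.
  rewrite -[X in _ --> X](_ : L * 0 + L * Cc * (0 * 0) = 0); last by rewrite !mulr0 addr0.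
  apply: cvgD; apply: cvgM => //; try exact: cvg_cst.
  exact: cvgM.
have hu1 : enorm u = 1.
  have h1 := cvgv_enorm hU.
  have e1 : forall k, enorm ((enorm (X k - xbar))^-1 *: (X k - xbar)) = 1.
    move=> k; have h := he k.
    by rewrite enormZ ger0_norm ?invr_ge0 ?enorm_ge0 // mulVf // gt_eqF.
  apply/eqP; rewrite eq_le; apply/andP; split.
    apply: (cv_le (v := fun => 1) _ h1 (cvg_cst _)).
    by apply: evT => k; rewrite e1.
  apply: (cv_le (u := fun => 1) _ (cvg_cst _) h1).
  by apply: evT => k; rewrite e1.
have simpl1 : forall k, xbar + enorm (X k - xbar) *: ((enorm (X k - xbar))^-1 *: (X k - xbar))
    = X k.
  move=> k; have h := he k.
  by rewrite scalerA mulfV ?gt_eqF // scale1r addrC subrK.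
have simpl2 : forall k, ybar + enorm (X k - xbar) *: ((enorm (X k - xbar))^-1 *: (Y k - ybar))
    = Y k.
  move=> k; have h := he k.
  by rewrite scalerA mulfV ?gt_eqF // scale1r addrC subrK.
have crit : critical_direction phi Phi xbar ybar u.
  split; first exact: hu1.
  exists (fun k => (enorm (X k - xbar))^-1 *: (X k - xbar)),
    (fun k => (enorm (X k - xbar))^-1 *: (Y k - ybar)), (fun k => enorm (X k - xbar)).
  split => //; split => //; split => //; split.
    apply/cvP => eps e0; have /cvgvP /(_ _ e0) hh := hX.
    by apply: (evW hh) => k h; rewrite sub0r normrN ger0_norm ?enorm_ge0.
  split; first by move=> k; rewrite simpl1 simpl2; have [[[hP _] _] _ _ _ _] := GI k.
  move=> eps e0.
  have [N HN] := hK (L * Cc / eps).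
  exists N => k hk; rewrite simpl1.
  have [hm c1 hx hy hz] := GI k.
  rewrite ler_pdivrMr ?he //.
  exact: (pGc hm c1 hx hz e0 (HN k hk)).
have hPk : forall k, Phi (X k) (Y k).
  by move=> k; have [[[hP _] _] _ _ _ _] := GI k.
have hnP : forall k, ~ Phi (X k) ybar.
  move=> k; have [hm c1 hx hy hz] := GI k.
  apply: (notfeas hm); first by apply: lt_le_trans ltr01 c1.
  apply/eqP => e; have := pos_rho c1 (proj1 (hT k)); rewrite e subrr enorm0 ltxx //.
have hne : forall k, Y k <> ybar.
  move=> k e; have [hm c1 hx hy hz] := GI k.
  by have := pos_rho c1 (proj1 (hT k)); rewrite e subrr enorm0 ltxx.
have hcod : forall k, reg_coderiv Phi (X k) (Y k) (lv (c k) (Y k)) (bv (c k) (X k) (Z k)).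
  by move=> k; have [hm c1 hx hy hz] := GI k; apply: optB.
have hLy : (fun k => enorm (lv (c k) (Y k))) @ \oo --> +oo.
  by apply/cvyP => M; apply: (evW (hL M)).
have hdf : cvgv (fun k => (enorm (Y k - ybar))^-1 *: (Y k - ybar)
                   - (enorm (lv (c k) (Y k)))^-1 *: lv (c k) (Y k)) 0.
  apply: (cvgv_ext (s := fun => 0)); last exact: cvgv_cst.
  move=> k; have [hm c1 hx hy hz] := GI k.
  by rewrite pdiff // (proj1 (hT k)).
have [yy Hyy] := Hreg crit hPk hnP hne hcod hX hY (lim_b G hA) hU hV hLy hdf hW.
exists yy, a, (- a); split; first exact: lim_sub_a G hA.
by split; last by rewrite subrr.
Qed.


Lemma caseB_mid X Y Z c a : Good X Y Z c ->
  cvgv (fun k => av (c k) (X k) (Z k)) a ->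
  (forall M, ev (fun k => M < enorm (lv (c k) (Y k)))) -> Tail X Y c ->
  M_stationary phi Phi xbar ybar.
Proof.
move=> G hA hL hT.
have bU : forall k, enorm ((enorm (X k - xbar))^-1 *: (X k - xbar)) <= 1.
  move=> k; have h := pos_e (proj2 (hT k)).
  by rewrite enormZ ger0_norm ?invr_ge0 ?enorm_ge0 // mulVf // gt_eqF.
have [f3 [hf3 [u hu]]] := bw_rV bU.
have G3 := Good_sub hf3 G.
have GI3 := Good_int G3.
have hT3 : Tail (fun k => X (f3 k)) (fun k => Y (f3 k)) (fun k => c (f3 k)).
  by move=> k; apply: hT.
have bW : forall k, enorm ((enorm (Y (f3 k) - ybar) / enorm (X (f3 k) - xbar)) *:
    lv (c (f3 k)) (Y (f3 k))) <= 2 * L + 2 * L * Cc.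
  move=> k; have [hm c1 hx hy hz] := GI3 k.
  exact: pGw hm c1 hz (proj1 (hT3 k)) (proj2 (hT3 k)).
have [f4 [hf4 [ys hys]]] := bw_rV bW.
have G4 := Good_sub hf4 G3.
apply: (caseB_fin (u := u) (ys := ys) (a := a) G4).
- exact: (cvgv_sub (s := fun k => av (c (f3 k)) (X (f3 k)) (Z (f3 k))) hf4
     (cvgv_sub (s := fun k => av (c k) (X k) (Z k)) hf3 hA)).
- move=> M; apply: (ev_sub (P := fun k => M < enorm (lv (c (f3 k)) (Y (f3 k))))) => //.
  exact: (ev_sub (P := fun k => M < enorm (lv (c k) (Y k)))).
- by move=> k; apply: hT.
- exact: (cvgv_sub (s := fun k => (enorm (X (f3 k) - xbar))^-1 *: (X (f3 k) - xbar))).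
- exact: hys.
Qed.

Lemma caseB X Y Z c a : Good X Y Z c ->
  cvgv (fun k => av (c k) (X k) (Z k)) a ->
  (forall M, ev (fun k => M < enorm (lv (c k) (Y k)))) ->
  M_stationary phi Phi xbar ybar.
Proof.
move=> G hA hL.
have [N HN] := ev_shift (evI (hL 0) (kappa_div G hL 1)).
have hs := incr_shift N.
apply: (caseB_mid (a := a) (Good_sub hs G)).
- exact: (cvgv_sub (s := fun k => av (c k) (X k) (Z k))).
- move=> M; exact: (ev_sub (P := fun k => M < enorm (lv (c k) (Y k)))).
- by move=> k; apply: HN.
Qed.

Lemma final_from X Y Z c a : Good X Y Z c ->
  cvgv (fun k => av (c k) (X k) (Z k)) a -> M_stationary phi Phi xbar ybar.
Proof.
move=> G hA.
have [hL|hL] := boolp.pselect (forall M, ev (fun k => M < enorm (lv (c k) (Y k)))).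
  exact: caseB G hA hL.
have [M hM] := (boolp.existsNP _).2 hL.
have hfr := not_ev hM.
have [f [hf hP]] := freq_sub hfr.
apply: (caseA (a := a) (M := M) (Good_sub hf G)).
  exact: (cvgv_sub (s := fun k => av (c k) (X k) (Z k))).
by move=> k; have := hP k; rewrite leNgt => /negP.
Qed.

Lemma final : M_stationary phi Phi xbar ybar.
Proof.
have [X [Y [Z [c G]]]] := Good_exists.
have GI := Good_int G.
have bA : forall k, enorm (av (c k) (X k) (Z k)) <= L + 1.
  move=> k; have [hm c1 hx hy hz] := GI k.
  have c0 : 0 <= c k by exact: le_trans ler01 c1.
  exact: boundA (optA hm c0 hz) hz.
have [f [hf [a ha]]] := bw_rV bA.
exact: (final_from (Good_sub hf G) ha).
Qed.

End Main.

Local Close Scope classical_set_scope.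
Theorem mainTheorem2 (R : realType) (n m : nat) (phi : 'rV[R]_n -> R)
    (Phi : 'rV[R]_n -> 'rV[R]_m -> Prop) (ybar : 'rV[R]_m) (xbar : 'rV[R]_n) :
  locally_lipschitz phi ->
  closed_graph Phi ->
  (exists x, Phi x ybar) ->
  local_minimizer phi Phi ybar xbar ->
  (forall u : 'rV[R]_n, critical_direction phi Phi xbar ybar u ->
     asymp_regular Phi xbar ybar u) ->
  M_stationary phi Phi xbar ybar.
Proof.
move=> Hlip Hcl _ [Hfeas [d1 [d10 Hmin]]] Hreg.
have [L0 [d0 [d00 HL0]]] := Hlip xbar.
set L := `|L0| + 1.
set r := Num.min d0 d1 / 2.
have HL : 0 < L by rewrite /L ltr_pwDr.
have m0 : 0 < Num.min d0 d1 by rewrite lt_min d00 d10.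
have Hr : 0 < r by rewrite /r divr_gt0.
have rlt : r < Num.min d0 d1 by rewrite /r ltr_pdivrMr // ltr_pMr // ltr1n.
have rd0 : r < d0 by apply: lt_le_trans rlt _; rewrite ge_min lexx.
have rd1 : r < d1 by apply: lt_le_trans rlt _; rewrite ge_min lexx orbT.
have Hlip' : forall y z, enorm (y - xbar) <= r -> enorm (z - xbar) <= r ->
    `|phi y - phi z| <= L * enorm (y - z).
  move=> y z hy hz.
  apply: le_trans (HL0 y z (le_lt_trans hy rd0) (le_lt_trans hz rd0)) _.
  apply: ler_wpM2r; first exact: enorm_ge0.
  by rewrite /L (le_trans (ler_norm L0)) // lerDl.
have Hloc : forall x, Phi x ybar -> enorm (x - xbar) <= r -> phi xbar <= phi x.
  by move=> x hx he; apply: Hmin => //; apply: le_lt_trans he rd1.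
exact: (final Hr HL Hlip' Hfeas Hloc Hcl Hreg).
Qed.
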